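(* Let $N\ge 5$ be odd and let $A$ be a compressible arrangement in the $N\times N$ square. Then $A$ is an acyclic polyomino if and only if its compression $C(A)$ is an acyclic polyomino each of whose holes has area one.
   Context: An arrangement in a rectangle is a choice of which unit squares (spaces) of the rectangle are filled with tiles; a polyomino is a finite union of closed unit tiles, meeting only in whole edges, with connected interior; its holes are the bounded components of the complement, the area of a hole is the number of unit squares filling it, and it is acyclic if its dual graph (tiles, adjacency along edges) is a tree. For the $N\times N$ square, its boundary layer is the outermost ring of spaces; $D_1$ denotes the boundary arrangement in which all ring spaces except the four corners are filled, $D_2$ the one with all ring spaces filled except exactly one corner. Index the interior $(N-2)\times(N-2)$ spaces by $(i,j)$, $1\le i,j\le N-2$, from the top-left; $W$ = spaces with $i+j$ even, $B$ = spaces with $i+j$ odd. For odd $N$, $P_N$ is the partial arrangement of the interior in which every space of $B$ is filled and every space $(i,j)$ with $i,j$ both odd is empty; the remaining spaces, $(i,j)$ with $i,j$ both even, form the $\frac{N-3}{2}\times\frac{N-3}{2}$ grid $U_N$. An arrangement $A$ in the $N\times N$ square is compressible if its boundary-layer part $D$ satisfies $D_1\subseteq D\subseteq D_2$ and its interior agrees with $P_N$; its compression $C(A)$ is the arrangement in the $\frac{N+1}{2}\times\frac{N+1}{2}$ square with the same boundary $D$ (placed at the corresponding positions) and whose interior space $(a,b)$ is filled iff space $(2a,2b)$ of $U_N$ is filled in $A$. *)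

(* Defs.v *)
From mathcomp Require Import all_boot.
Set Implicit Arguments. Unset Strict Implicit. Unset Printing Implicit Defensive.

(* Spaces (unit squares) of the n x n square: (row, column), 0-based from the
   top-left.  An interior space with interior index (i,j) (1-based, 1 <= i,j <= n-2)
   is exactly the space with 0-based square coordinates (i,j). *)
Definition cell (n : nat) := ('I_n * 'I_n)%type.

Definition arrangement (n : nat) := {set cell n}.

Definition adj n (x y : cell n) : bool :=
  ((x.1 == y.1 :> nat) && ((x.2.+1 == y.2 :> nat) || (y.2.+1 == x.2 :> nat)))
  || ((x.2 == y.2 :> nat) && ((x.1.+1 == y.1 :> nat) || (y.1.+1 == x.1 :> nat))).

Definition dual n (A : arrangement n) : rel (cell n) :=
  fun x y => [&& x \in A, y \in A & adj x y].

(* A is a polyomino: nonempty with connected interior, i.e. the filled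
   spaces are connected through shared edges. *)
Definition polyomino n (A : arrangement n) : Prop :=
  A != set0 /\ forall x y, x \in A -> y \in A -> connect (dual A) x y.

Definition has_dual_cycle n (A : arrangement n) : Prop :=
  exists c : seq (cell n), [/\ uniq c, 2 < size c & cycle (dual A) c].

Definition acyclic_polyomino n (A : arrangement n) : Prop :=
  polyomino A /\ ~ has_dual_cycle A.

Definition on_ring n (x : cell n) : bool :=
  [|| x.1 == 0 :> nat, x.1 == n.-1 :> nat, x.2 == 0 :> nat | x.2 == n.-1 :> nat].
Definition is_corner n (x : cell n) : bool :=
  ((x.1 == 0 :> nat) || (x.1 == n.-1 :> nat)) &&
  ((x.2 == 0 :> nat) || (x.2 == n.-1 :> nat)).

Definition empty_adj n (A : arrangement n) : rel (cell n) :=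
  fun x y => [&& x \notin A, y \notin A & adj x y].

(* Holes: bounded components of the complement of the polyomino.  These are
   exactly the edge-connected components of empty spaces that contain no
   space of the boundary layer (such a component is not adjacent to the
   unbounded exterior of the square).  The area of a hole is its number of
   spaces, #|H|. *)
Definition is_hole n (A : arrangement n) (H : {set cell n}) : Prop :=
  exists2 x, x \notin A &
    H = [set y | connect (empty_adj A) x y] /\ (forall y, y \in H -> ~~ on_ring y).

(* Compressible arrangement (N odd): boundary part D with D1 <= D <= D2,
   i.e. every non-corner ring space is filled and (some) corner is empty,
   and interior agreeing with P_N: spaces with i+j odd filled, spaces with
   i,j both odd empty. *)
Definition compressible n (A : arrangement n) : Prop :=
  [/\ forall x : cell n, on_ring x -> ~~ is_corner x -> x \in A,
      exists2 x : cell n, is_corner x & x \notin A,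
      forall x : cell n, ~~ on_ring x -> odd (x.1 + x.2) -> x \in A &
      forall x : cell n, ~~ on_ring x -> odd x.1 -> odd x.2 -> x \notin A].

Definition filled n (A : arrangement n) (r c : nat) : bool :=
  [exists x in A, (x.1 == r :> nat) && (x.2 == c :> nat)].

(* On the boundary this sends
   corners to corners and side spaces to side spaces (placing D at the
   corresponding positions); in the interior (a,b) goes to (2a,2b) of U_N. *)
Definition compress n (A : arrangement n) : arrangement (n.+1)./2 :=
  [set x : cell (n.+1)./2 | filled A (2 * x.1) (2 * x.2)].

(* Main.v *)
Require Import Defs.
From mathcomp Require Import all_boot.
From mathcomp Require Import zify.
Set Implicit Arguments. Unset Strict Implicit. Unset Printing Implicit Defensive.


Lemma cell_eqE n (x y : cell n) : (x == y) = ((x.1 : nat) == y.1) && ((x.2 : nat) == y.2).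
Proof. by []. Qed.

Lemma cellP n (x y : cell n) : (x.1 : nat) = y.1 -> (x.2 : nat) = y.2 -> x = y.
Proof. by move=> h1 h2; apply/eqP; rewrite cell_eqE h1 h2 !eqxx. Qed.

Definition phi N' (y : cell (N'./2).+1) : cell N'.+1 := (inord (2 * y.1), inord (2 * y.2)).
Definition mid N' (y z : cell (N'./2).+1) : cell N'.+1 :=
  (inord (y.1 + z.1), inord (y.2 + z.2)).
Definition psi N' (x : cell N'.+1) : cell (N'./2).+1 := (inord (x.1./2), inord (x.2./2)).
Definition other N' (s : cell (N'./2).+1) (x : cell N'.+1) : cell (N'./2).+1 :=
  (inord (x.1 - s.1), inord (x.2 - s.2)).

Lemma phi1 N' (y : cell (N'./2).+1) : ((phi y).1 : nat) = 2 * y.1.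
Proof. rewrite /= inordK //; have := ltn_ord y.1; lia. Qed.
Lemma phi2 N' (y : cell (N'./2).+1) : ((phi y).2 : nat) = 2 * y.2.
Proof. rewrite /= inordK //; have := ltn_ord y.2; lia. Qed.
Lemma mid1 N' (y z : cell (N'./2).+1) : ((mid y z).1 : nat) = y.1 + z.1.
Proof. rewrite /= inordK //; have := ltn_ord y.1; have := ltn_ord z.1; lia. Qed.
Lemma mid2 N' (y z : cell (N'./2).+1) : ((mid y z).2 : nat) = y.2 + z.2.
Proof. rewrite /= inordK //; have := ltn_ord y.2; have := ltn_ord z.2; lia. Qed.
Lemma psi1 N' (x : cell N'.+1) : ((psi x).1 : nat) = x.1./2.
Proof. rewrite /= inordK //; have := ltn_ord x.1; lia. Qed.
Lemma psi2 N' (x : cell N'.+1) : ((psi x).2 : nat) = x.2./2.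
Proof. rewrite /= inordK //; have := ltn_ord x.2; lia. Qed.

Ltac bnd x := have := ltn_ord x.1; have := ltn_ord x.2.
Ltac crd := rewrite ?cell_eqE /adj ?(phi1, phi2, mid1, mid2, psi1, psi2) /=.

Lemma psi_phi N' (y : cell (N'./2).+1) : psi (phi y) = y.
Proof. apply: cellP; crd; lia. Qed.

Lemma phi_psi N' (x : cell N'.+1) : ~~ odd x.1 -> ~~ odd x.2 -> phi (psi x) = x.
Proof. move=> h1 h2; apply: cellP; crd; lia. Qed.

Lemma phi_inj N' : injective (@phi N').
Proof. by move=> y z e; rewrite -(psi_phi y) e psi_phi. Qed.

Lemma other_spec N' (s : cell (N'./2).+1) (x : cell N'.+1) : ~~ odd N' ->
  adj (phi s) x -> odd (x.1 + x.2) -> adj s (other s x) /\ x = mid s (other s x).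
Proof.
move=> hN ha ho.
have o1 : ((other s x).1 : nat) = x.1 - s.1.
  move: ha ho; crd; move=> ha ho; rewrite /= inordK //; bnd x; bnd s; intros; lia.
have o2 : ((other s x).2 : nat) = x.2 - s.2.
  move: ha ho; crd; move=> ha ho; rewrite /= inordK //; bnd x; bnd s; intros; lia.
split.
  by rewrite /adj o1 o2; move: ha ho; crd; intros; lia.
apply: cellP; rewrite ?mid1 ?mid2 ?o1 ?o2; move: ha ho; crd; intros; lia.
Qed.

Lemma adj_mid_end N' (t z z' : cell (N'./2).+1) :
  adj (phi t) (mid z z') -> adj z z' -> t = z \/ t = z'.
Proof.
move=> h1 h2.
have [e|e] : ((t.1 : nat) = z.1 /\ (t.2 : nat) = z.2) \/ ((t.1 : nat) = z'.1 /\ (t.2 : nat) = z'.2).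
  by move: h1 h2; crd; intros; lia.
- by left; apply: cellP; case: e.
- by right; apply: cellP; case: e.
Qed.

Lemma adj_sym n (x y : cell n) : adj x y = adj y x.
Proof. rewrite /adj; apply/idP/idP; lia. Qed.

Lemma adj_irr n (x : cell n) : adj x x = false.
Proof. rewrite /adj; apply/negP; lia. Qed.

Lemma dual_sym n (A : arrangement n) : symmetric (dual A).
Proof. by move=> x y; rewrite /dual adj_sym andbCA. Qed.

Lemma dual_irr n (A : arrangement n) : irreflexive (dual A).
Proof. by move=> x; rewrite /dual adj_irr !andbF. Qed.

Lemma adj_par n (u v : cell n) : adj u v -> odd (v.1 + v.2) = ~~ odd (u.1 + u.2).
Proof. rewrite /adj => h; apply/idP/idP; intros; lia. Qed.
Lemma ee_split n (v : cell n) : ~~ (odd v.1 && odd v.2) -> ~~ odd (v.1 + v.2) ->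
  ~~ odd v.1 /\ ~~ odd v.2.
Proof. intros; lia. Qed.
Lemma not_ee_odd n (x : cell n) : ~~ (odd x.1 && odd x.2) -> ~~ (~~ odd x.1 && ~~ odd x.2) ->
  odd (x.1 + x.2).
Proof. intros; lia. Qed.
Lemma ee_sum n (x : cell n) : ~~ odd x.1 -> ~~ odd x.2 -> ~~ odd (x.1 + x.2).
Proof. intros; lia. Qed.
Lemma phi_even N' (y : cell (N'./2).+1) : ~~ odd ((phi y).1 + (phi y).2).
Proof. crd; lia. Qed.
Lemma mid_odd N' (z z' : cell (N'./2).+1) : adj z z' -> odd ((mid z z').1 + (mid z z').2).
Proof. crd; intros; lia. Qed.
Lemma adj_phi_mid N' (z z' : cell (N'./2).+1) : adj z z' ->
  adj (phi z) (mid z z') /\ adj (phi z') (mid z z').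
Proof. crd; intros; lia. Qed.
Lemma phi_neq_mid N' (y z z' : cell (N'./2).+1) : adj z z' -> (phi y == mid z z') = false.
Proof.
move=> h; apply/negP => /eqP e; have := mid_odd h.
by rewrite -e (negbTE (phi_even y)).
Qed.


Definition rme (T : finType) (e : rel T) (a b : T) : rel T :=
  fun u v => e u v && ~~ (((u == a) && (v == b)) || ((u == b) && (v == a))).

Lemma rem_sym (T : finType) (e : rel T) a b : symmetric e -> symmetric (rme e a b).
Proof.
by move=> se u v; rewrite /rme se orbC (andbC (u == b)) (andbC (u == a)).
Qed.

Lemma rem_self (T : finType) (e : rel T) a : irreflexive e -> rme e a a =2 e.
Proof.
move=> ie u v; rewrite /rme; case: (boolP (e u v)) => //= h.
apply/negP => /orP[]/andP[/eqP eu /eqP ev]; by move: h; rewrite eu ev ie.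
Qed.

Lemma path_inv (T : Type) (e : rel T) (P : T -> Prop) x p :
  path e x p -> P x -> (forall u v, P u -> e u v -> P v) -> P (last x p).
Proof.
elim: p x => //= y p IH x /andP[h hp] Px st; exact: IH hp (st _ _ Px h) st.
Qed.

Lemma connect_inv (T : finType) (e : rel T) (P : T -> Prop) x y :
  connect e x y -> P x -> (forall u v, P u -> e u v -> P v) -> P y.
Proof. by move/connectP=> [p hp ->]; apply: path_inv. Qed.

Lemma isolated (T : finType) (e : rel T) x y :
  (forall w, ~~ e x w) -> connect e x y -> y = x.
Proof.
move=> h /connectP [[|w p] /= hp ->] //.
by move: hp; rewrite (negbTE (h w)).
Qed.

Lemma cycle_bridge (T : finType) (e : rel T) : symmetric e -> irreflexive e ->
  (exists c : seq T, [/\ uniq c, 2 < size c & cycle e c]) <->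
  exists a b, e a b /\ connect (rme e a b) a b.
Proof.
move=> se ie; split.
- move=> [c [uc sc cc]].
  case: c uc sc cc => [|x [|y [|z q]]] //= uc sc cc.
  case/andP: cc => exy cc.
  exists x, y; split => //.
  rewrite (sym_connect_sym (rem_sym x y se)).
  have xy : x != y by apply: contraTneq exy => ->; rewrite ie.
  move: uc; rewrite !inE !negb_or => /and3P[/and3P[_ xz xq] /andP[yz yq] _].
  apply/connectP; exists (z :: rcons q x); last by rewrite -rcons_cons last_rcons.
  move: cc; rewrite /= rcons_path => /and3P[eyz pq el].
  rewrite /= rcons_path; apply/and3P; split.
  + by rewrite /rme eyz /= [y == x]eq_sym (negbTE xy) [z == x]eq_sym (negbTE xz) andbF.
  + apply: (@sub_in_path _ (predC1 x) e) => //.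
    * move=> u v; rewrite !inE => ux vx euv.
      by rewrite /rme euv (negbTE ux) (negbTE vx) andbF.
    * by rewrite /= eq_sym xz; apply/allP => w wq; apply: contraNneq xq => <-.
  + have lq : last z q \in z :: q by apply: mem_last.
    rewrite /rme el /= eqxx andbT.
    have -> : (last z q == x) = false.
      by apply/negbTE; apply: contraNneq xz => e1; move: lq; rewrite e1 inE => /orP[/eqP ->|]; [rewrite eqxx| move=> xq'; move: xq; rewrite xq'].
    have -> : (last z q == y) = false.
      by apply/negbTE; apply: contraNneq yz => e1; move: lq; rewrite e1 inE => /orP[/eqP ->|]; [rewrite eqxx| move=> yq'; move: yq; rewrite yq'].
    by [].
- move=> [a [b [eab /connectP [p hp hl]]]].
  case: (shortenP hp) hl => p' hp' up' _ hl.
  exists (a :: p'); split => //.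
  + case: p' hp' up' hl => [|w [|w' p'']] //=.
    * by move=> _ _ eab'; move: eab; rewrite -eab' ie.
    * move=> /andP[hw _] _ ew; move: hw; rewrite /rme -ew eqxx /=.
      by rewrite eqxx /= andbF.
  + rewrite /= rcons_path -hl se eab andbT.
    apply: sub_path hp' => u v; by case/andP.
Qed.



Lemma inC N' (A : arrangement N'.+1) (y : cell (N'./2).+1) :
  (y \in (compress A : arrangement (N'./2).+1)) = (phi y \in A).
Proof.
rewrite inE /filled; apply/existsP/idP => [[x /andP[xA /andP[/eqP h1 /eqP h2]]]|h].
- have -> : phi y = x by apply: cellP; rewrite ?phi1 ?phi2.
  exact: xA.
- by exists (phi y); rewrite h phi1 phi2 !eqxx.
Qed.

Lemma connect_inv_cell n (e : rel (cell n)) (P : cell n -> Prop) x y :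
  connect e x y -> P x -> (forall u v : cell n, P u -> e u v -> P v) -> P y.
Proof. exact: connect_inv. Qed.

Lemma mid_self N' (y : cell (N'./2).+1) : mid y y = phi y.
Proof. apply: cellP; crd; lia. Qed.

Lemma ringA N' (A : arrangement N'.+1) (x : cell N'.+1) : compressible A ->
  on_ring x -> ~~ is_corner x -> x \in A.
Proof. by case=> hr _ _ _; apply: hr. Qed.

Lemma in_odd N' (A : arrangement N'.+1) (x : cell N'.+1) : ~~ odd N' -> compressible A ->
  odd (x.1 + x.2) -> x \in A.
Proof.
move=> hN HA ho; case: (HA) => hr _ hi _.
case: (boolP (on_ring x)) => r; last exact: hi.
apply (hr x r); move: r ho; rewrite /on_ring /is_corner /=; intros; lia.
Qed.

Lemma out_oo N' (A : arrangement N'.+1) (x : cell N'.+1) : ~~ odd N' -> compressible A ->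
  odd x.1 -> odd x.2 -> x \notin A.
Proof.
move=> hN [_ _ _ h] o1 o2; apply: h => //.
rewrite /on_ring; bnd x; intros; lia.
Qed.

Lemma even_of_A N' (A : arrangement N'.+1) (x : cell N'.+1) : ~~ odd N' -> compressible A ->
  x \in A -> ~~ (odd x.1 && odd x.2).
Proof.
move=> hN HA xA; apply/negP => /andP[o1 o2].
by move: (out_oo hN HA o1 o2); rewrite xA.
Qed.

Lemma ringC N' (A : arrangement N'.+1) (y : cell (N'./2).+1) : ~~ odd N' -> compressible A ->
  on_ring y -> ~~ is_corner y -> y \in (compress A : arrangement (N'./2).+1).
Proof.
move=> hN HA r c; rewrite inC; apply: ringA HA _ _; move: r c;
  rewrite /on_ring /is_corner phi1 phi2 /=; bnd y; intros; lia.
Qed.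

Lemma corner_nb N' (y t : cell (N'./2).+1) : 4 <= N' ->
  is_corner y -> adj y t -> on_ring t && ~~ is_corner t.
Proof. move=> h4; rewrite /is_corner /on_ring /adj /=; bnd t; bnd y; intros; lia. Qed.

Lemma dual_step N' (A : arrangement N'.+1) (y y' : cell (N'./2).+1) : ~~ odd N' -> compressible A ->
  dual (compress A : arrangement (N'./2).+1) y y' ->
  [/\ dual A (phi y) (mid y y'), dual A (mid y y') (phi y') & adj y y'].
Proof.
move=> hN HA; rewrite /dual !inC => /and3P[hy hy' ad].
have mA : mid y y' \in A by apply: in_odd hN HA _; move: ad; crd; intros; lia.
by rewrite hy hy' mA ad; split => //; move: ad; crd; intros; lia.
Qed.

Lemma R1 N' (A : arrangement N'.+1) (z z' y y' : cell (N'./2).+1) : ~~ odd N' -> compressible A ->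
  connect (rme (dual (compress A : arrangement (N'./2).+1)) z z') y y' ->
  connect (rme (dual A) (phi z) (mid z z')) (phi y) (phi y').
Proof.
move=> hN HA /connectP[p hp ->]; elim: p y hp => [|w p IH] y /=.
  by move=> _; exact: connect0.
case/andP=> st hp; apply: connect_trans (IH _ hp).
move: st; rewrite /rme => /andP[dw ex]; have [d1 d2 adw] := dual_step hN HA dw.
apply: (@connect_trans _ _ (mid y w)); apply: connect1; rewrite /rme ?d1 ?d2 /=.
- apply: contra ex; move: adw; crd; intros; lia.
- apply: contra ex; move: adw; crd; intros; lia.
Qed.

Lemma R2 N' (A : arrangement N'.+1) (z z' : cell (N'./2).+1) (x : cell N'.+1) :
  ~~ odd N' -> compressible A ->
  connect (rme (dual A) (phi z) (mid z z')) (phi z) x ->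
  (~~ odd x.1 -> ~~ odd x.2 ->
     connect (rme (dual (compress A : arrangement (N'./2).+1)) z z') z (psi x)) /\
  (odd (x.1 + x.2) -> forall t, adj (phi t) x -> phi t \in A ->
     connect (rme (dual (compress A : arrangement (N'./2).+1)) z z') z t).
Proof.
move=> hN HA hc.
pose C := (compress A : arrangement (N'./2).+1).
pose P (x : cell N'.+1) := (~~ odd x.1 -> ~~ odd x.2 ->
     connect (rme (dual C) z z') z (psi x)) /\
  (odd (x.1 + x.2) -> forall t, adj (phi t) x -> phi t \in A ->
     connect (rme (dual C) z z') z t).
apply: (connect_inv_cell (P := P) hc) => [|u v [P1 P2] euv].
  split => [_ _|]; first by rewrite psi_phi connect0.
  by rewrite phi1 phi2; intros; lia.
move: euv; rewrite /rme /dual => /andP[/and3P[uA vA auv] ex].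
have eu := even_of_A hN HA uA; have evv := even_of_A hN HA vA.
case: (boolP (odd u.1 && odd u.2)) => [h|_]; first by rewrite h in eu.
case: (boolP (odd (u.1 + u.2))) => ho.
- (* u is an edge cell, v a vertex cell *)
  have sv : ~~ odd (v.1 + v.2) by rewrite (adj_par auv) ho.
  have [v1 v2] := ee_split evv sv.
  split => [_ _|]; last by rewrite (adj_par auv) ho.
  apply: P2 => //; rewrite phi_psi //; by rewrite adj_sym.
- have [u1 u2] := ee_split eu ho.
  have hv : odd (v.1 + v.2) by rewrite (adj_par auv) ho.
  split => [v1 v2|_ t hat tA]; first by move: hv; rewrite (negbTE (ee_sum v1 v2)).
  set s := psi u; have us : u = phi s by rewrite /s phi_psi.
  have cs := P1 u1 u2; rewrite -/s in cs.
  rewrite us in auv; have [ass' ev] := other_spec hN auv hv.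
  set s' := other s v in ass' ev.
  rewrite ev in hat; case: (adj_mid_end hat ass') => et; subst t; first exact: cs.
  case: (boolP ((s == z) && (s' == z'))) => [/andP[/eqP e1 /eqP e2]|ne1].
    by move: ex; rewrite us ev e1 e2 !eqxx.
  case: (boolP ((s == z') && (s' == z))) => [/andP[_ /eqP ->]|ne2].
    exact: connect0.
  apply: connect_trans cs (connect1 _).
  rewrite /rme /dual !inC -us uA ass' negb_or ne1 ne2 andbT /=.
  by rewrite tA.
Qed.

Lemma rme_swap (T : finType) (e : rel T) a b : rme e a b =2 rme e b a.
Proof. by move=> u v; rewrite /rme orbC. Qed.

Lemma conn_CA N' (A : arrangement N'.+1) (y y' : cell (N'./2).+1) : ~~ odd N' -> compressible A ->
  connect (dual (compress A : arrangement (N'./2).+1)) y y' ->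
  connect (dual A) (phi y) (phi y').
Proof.
move=> hN HA h.
have h1 : connect (rme (dual (compress A : arrangement (N'./2).+1)) y y) y y'.
  by rewrite (eq_connect (rem_self _ (@dual_irr _ _))).
have := R1 hN HA h1; rewrite mid_self.
by rewrite (eq_connect (rem_self _ (@dual_irr _ _))).
Qed.

Lemma conn_AC N' (A : arrangement N'.+1) (y y' : cell (N'./2).+1) : ~~ odd N' -> compressible A ->
  connect (dual A) (phi y) (phi y') ->
  connect (dual (compress A : arrangement (N'./2).+1)) y y'.
Proof.
move=> hN HA h.
have h1 : connect (rme (dual A) (phi y) (mid y y)) (phi y) (phi y').
  by rewrite mid_self (eq_connect (rem_self _ (@dual_irr _ _))).
have [P1 _] := R2 hN HA h1.
have e1 : ~~ odd (phi y').1 by rewrite phi1; lia.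
have e2 : ~~ odd (phi y').2 by rewrite phi2; lia.
have := P1 e1 e2.
by rewrite psi_phi (eq_connect (rem_self _ (@dual_irr _ _))).
Qed.

Lemma acyc_AC N' (A : arrangement N'.+1) : ~~ odd N' -> compressible A ->
  ~ has_dual_cycle A -> ~ has_dual_cycle (compress A : arrangement (N'./2).+1).
Proof.
move=> hN HA nA nC; apply: nA; move: nC.
rewrite /has_dual_cycle !(cycle_bridge (@dual_sym _ _) (@dual_irr _ _)).
move=> [z [z' [dz cz]]].
have [d1 d2 az] := dual_step hN HA dz.
exists (phi z), (mid z z'); split => //.
apply: connect_trans (R1 hN HA cz) (connect1 _).
have nz : (z' == z) = false by apply/negP => /eqP e; move: az; rewrite e adj_irr.
by rewrite /rme dual_sym d2 (inj_eq (@phi_inj _)) nz (phi_neq_mid _ az).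
Qed.

Lemma acyc_CA N' (A : arrangement N'.+1) : ~~ odd N' -> compressible A ->
  ~ has_dual_cycle (compress A : arrangement (N'./2).+1) -> ~ has_dual_cycle A.
Proof.
move=> hN HA nC; rewrite /has_dual_cycle (cycle_bridge (@dual_sym _ _) (@dual_irr _ _)).
move=> [u [v [duv cuv]]].
have [u0 e0] : exists u0 : cell N'.+1, u = u0 by exists u.
have [v0 f0] : exists v0 : cell N'.+1, v = v0 by exists v.
subst u v; rename u0 into u; rename v0 into v.
wlog ue : u v duv cuv / ~~ odd u.1 && ~~ odd u.2.
  move=> W; case: (boolP (~~ odd u.1 && ~~ odd u.2)) => h; first exact: W _ _ duv cuv h.
  apply: (W v u); first by rewrite dual_sym.
    rewrite (eq_connect (rme_swap _ _ _)) (sym_connect_sym (rem_sym _ _ (@dual_sym _ _))).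
    exact: cuv.
  move: duv; rewrite /dual => /and3P[uA vA auv].
  have hu := not_ee_odd (even_of_A hN HA uA) h.
  have sv : ~~ odd (v.1 + v.2) by rewrite (adj_par auv) hu.
  have [v1 v2] := ee_split (even_of_A hN HA vA) sv.
  by rewrite v1 v2.
move: duv; rewrite /dual => /and3P[uA vA auv].
case/andP: ue => u1 u2.
have hv : odd (v.1 + v.2) by rewrite (adj_par auv) (ee_sum u1 u2).
set z := psi u; have us : u = phi z by rewrite /z phi_psi.
rewrite us in auv; have [az' ev] := other_spec hN auv hv.
set z' := other z v in az' ev.
rewrite us ev in cuv.
have [_ P2] := R2 hN HA cuv.
case: (boolP (phi z' \in A)) => hz'.
- apply: nC; rewrite /has_dual_cycle (cycle_bridge (@dual_sym _ _) (@dual_irr _ _)).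
  exists z, z'; split.
    by rewrite /dual !inC -us uA hz' az'.
  apply: P2 => //; [exact: mid_odd | by case: (adj_phi_mid az')].
- have iso : forall w, ~~ rme (dual A) (phi z) (mid z z') (mid z z') w.
    move=> w; apply/negP; rewrite /rme /dual => /andP[/and3P[_ wA aw] ex].
    have sw : ~~ odd (w.1 + w.2) by rewrite (adj_par aw) (mid_odd az').
    have [w1 w2] := ee_split (even_of_A hN HA wA) sw.
    rewrite -(phi_psi w1 w2) in aw wA ex.
    rewrite adj_sym in aw.
    case: (adj_mid_end aw az') => e.
      by move: ex; rewrite e !eqxx orbT.
    by move: hz'; rewrite -e wA.
  rewrite (sym_connect_sym (rem_sym _ _ (@dual_sym _ _))) in cuv.
  have := isolated iso cuv => e.
  by move: (mid_odd az'); rewrite -e (negbTE (phi_even z)).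
Qed.



Lemma polyAC N' (A : arrangement N'.+1) : ~~ odd N' -> 4 <= N' -> compressible A ->
  polyomino A -> polyomino (compress A : arrangement (N'./2).+1).
Proof.
move=> hN h4 HA [_ cA]; split.
- apply/set0Pn; exists ((inord 0, inord 1) : cell (N'./2).+1).
  have e0 : ((inord 0 : 'I_(N'./2).+1) : nat) = 0 by rewrite inordK.
  have e1 : ((inord 1 : 'I_(N'./2).+1) : nat) = 1 by rewrite inordK //; lia.
  apply: ringC hN HA _ _; rewrite /on_ring /is_corner /= e0 e1; lia.
- move=> y y' hy hy'; rewrite inC in hy; rewrite inC in hy'.
  by apply: conn_AC hN HA _; apply: cA.
Qed.

Lemma big01 N' (A : arrangement N'.+1) : 4 <= N' -> compressible A ->
  exists x1 x2 : cell N'.+1, [/\ x1 \in A, x2 \in A & x1 != x2].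
Proof.
move=> h4 HA.
have e0 : ((inord 0 : 'I_N'.+1) : nat) = 0 by rewrite inordK.
have e1 : ((inord 1 : 'I_N'.+1) : nat) = 1 by rewrite inordK //; lia.
exists (inord 0, inord 1), (inord 1, inord 0); split.
- by apply: ringA HA _ _; rewrite /on_ring /is_corner /= e0 e1; lia.
- by apply: ringA HA _ _; rewrite /on_ring /is_corner /= e0 e1; lia.
- by rewrite cell_eqE /= e0 e1.
Qed.

Lemma indepA N' (A : arrangement N'.+1) : ~~ odd N' -> 4 <= N' -> compressible A ->
  polyomino A -> forall t t' : cell (N'./2).+1, adj t t' ->
  t \in (compress A : arrangement (N'./2).+1) \/ t' \in (compress A : arrangement (N'./2).+1).
Proof.
move=> hN h4 HA [_ cA] t t' att; rewrite !inC.
case: (boolP (phi t \in A)) => ht; first by left.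
case: (boolP (phi t' \in A)) => ht'; first by right.
exfalso.
have mA : mid t t' \in A := in_odd hN HA (mid_odd att).
have iso : forall w, ~~ dual A (mid t t') w.
  move=> w; apply/negP; rewrite /dual => /and3P[_ wA aw].
  have sw : ~~ odd (w.1 + w.2) by rewrite (adj_par aw) (mid_odd att).
  have [w1 w2] := ee_split (even_of_A hN HA wA) sw.
  rewrite -(phi_psi w1 w2) adj_sym in aw; rewrite -(phi_psi w1 w2) in wA.
  case: (adj_mid_end aw att) => e; rewrite e in wA.
    by rewrite wA in ht.
  by rewrite wA in ht'.
have [x1 [x2 [x1A x2A nx]]] := big01 h4 HA.
have e1 := isolated iso (cA _ _ mA x1A).
have e2 := isolated iso (cA _ _ mA x2A).
by rewrite e1 e2 eqxx in nx.
Qed.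

Lemma holes_of_indep n (B : arrangement n) :
  (forall t t' : cell n, adj t t' -> t \in B \/ t' \in B) ->
  forall H : {set cell n}, is_hole B H -> #|H| = 1.
Proof.
move=> ind H [x xn [-> _]].
rewrite (_ : [set y | _] = [set x]) ?cards1 //.
apply/setP => y; rewrite !inE; apply/idP/idP => [h|/eqP->]; last exact: connect0.
have iso : forall w, ~~ empty_adj B x w.
  move=> w; apply/negP; rewrite /empty_adj => /and3P[_ wn axw].
  by case: (ind _ _ axw) => h'; [rewrite h' in xn | rewrite h' in wn].
by rewrite (isolated iso h).
Qed.

Lemma indep_of_holes n (B : arrangement n) :
  (forall y : cell n, on_ring y -> ~~ is_corner y -> y \in B) ->
  (forall y t : cell n, is_corner y -> adj y t -> on_ring t && ~~ is_corner t) ->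
  (forall H : {set cell n}, is_hole B H -> #|H| = 1) ->
  forall t t' : cell n, adj t t' -> t \in B \/ t' \in B.
Proof.
move=> rB cB hH t t' att.
case: (boolP (t \in B)) => tB; first by left.
case: (boolP (t' \in B)) => t'B; first by right.
exfalso.
have esym : symmetric (empty_adj B) by move=> a b; rewrite /empty_adj adj_sym andbCA.
have ring_empty : forall s, s \notin B -> on_ring s -> forall w, ~~ empty_adj B s w.
  move=> s sB sr w; apply/negP; rewrite /empty_adj => /and3P[_ wB asw].
  case: (boolP (is_corner s)) => sc; last by rewrite (rB _ sr sc) in sB.
  case/andP: (cB _ _ sc asw) => wr wc.
  by rewrite (rB _ wr wc) in wB.
have ett : empty_adj B t t' by rewrite /empty_adj tB t'B att.
pose H := [set y | connect (empty_adj B) t y].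
have hole : is_hole B H.
  exists t => //; split => // y; rewrite inE => hy.
  have yn : y \notin B.
    apply: (connect_inv_cell (P := fun w => w \notin B) hy tB).
    by move=> u v _ /and3P[].
  apply/negP => yr.
  rewrite (sym_connect_sym esym) in hy.
  have ey := isolated (ring_empty y yn yr) hy.
  by move: (ring_empty y yn yr t'); rewrite -ey ett.
have := hH _ hole.
have sub : [set t; t'] \subset H.
  apply/subsetP => w; rewrite !inE => /orP[]/eqP->; first exact: connect0.
  exact: connect1.
have := subset_leq_card sub; rewrite cards2.
have -> : t != t' by apply/negP => /eqP e; move: att; rewrite e adj_irr.
by move=> h e; rewrite e in h.
Qed.

Lemma polyCA N' (A : arrangement N'.+1) : ~~ odd N' -> 4 <= N' -> compressible A ->
  polyomino (compress A : arrangement (N'./2).+1) ->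
  (forall t t' : cell (N'./2).+1, adj t t' ->
    t \in (compress A : arrangement (N'./2).+1) \/ t' \in (compress A : arrangement (N'./2).+1)) ->
  polyomino A.
Proof.
move=> hN h4 HA [_ cC] ind.
have [x1 [_ [x1A _ _]]] := big01 h4 HA.
split; first by apply/set0Pn; exists x1.
have reach : forall x, x \in A ->
    exists2 t : cell (N'./2).+1, phi t \in A & connect (dual A) (phi t) x.
  move=> x xA; case: (boolP (odd (x.1 + x.2))) => ho.
  - set s := psi x.
    have ax : adj (phi s) x by rewrite /s; move: ho; crd; intros; lia.
    have [ass' ev] := other_spec hN ax ho.
    case: (ind _ _ ass'); rewrite inC => h.
    + by exists s => //; apply: connect1; rewrite /dual h xA ax.
    + exists (other s x) => //; apply: connect1; rewrite /dual h xA /=.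
      by rewrite {2}ev; case: (adj_phi_mid ass').
  - have [x1' x2'] := ee_split (even_of_A hN HA xA) ho.
    by exists (psi x); rewrite phi_psi.
move=> x y xA yA.
have [t tA ct] := reach x xA; have [t' tA' ct'] := reach y yA.
rewrite (sym_connect_sym (@dual_sym _ _)) in ct.
apply: connect_trans ct (connect_trans _ ct').
by apply: conn_CA hN HA _; apply: cC; rewrite inC.
Qed.

Theorem lemma8 (N : nat) (A : arrangement N) :
  5 <= N -> odd N -> compressible A ->
  (acyclic_polyomino A <->
   (acyclic_polyomino (compress A) /\
    forall H : {set cell (N.+1)./2}, is_hole (compress A) H -> #|H| = 1)).
Proof.
case: N A => [|N'] A // h5 hodd HA.
have hN : ~~ odd N' by [].
have h4 : 4 <= N' by [].
change (acyclic_polyomino A <->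
   (acyclic_polyomino (compress A : arrangement (N'./2).+1) /\
    forall H : {set cell (N'./2).+1}, is_hole (compress A : arrangement (N'./2).+1) H -> #|H| = 1)).
split.
- move=> [pA nA]; split; first split.
  + exact: polyAC.
  + exact: acyc_AC.
  + apply: holes_of_indep; exact: indepA.
- move=> [[pC nC] hH]; split.
  + apply: (polyCA hN h4 HA pC).
    apply: (indep_of_holes _ _ hH).
    * by move=> y; apply: (ringC hN HA).
    * by move=> y t; apply: (@corner_nb N' y t h4).
  + exact: acyc_CA.
Qed.
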